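(* Let $\lambda\in\mathbb{R}$ and define, for $x>0$, $$F_\lambda(x)=\psi'(x)-\frac{\lambda (4+8 x+5 x^2)}{24 x (1+x)^3 (2+x)^2}-\frac{24+120 x+283 x^2+399 x^3+345 x^4+181 x^5+51 x^6+6 x^7}{6 x^2 (1+x)^4 (2+x)^2}.$$ Then $F_\lambda$ is completely monotonic on $(0,\infty)$ if and only if $\lambda\le0$, and $-F_\lambda$ is completely monotonic on $(0,\infty)$ if and only if $\lambda\ge4$.
   Context: $\Gamma$ is Euler's gamma function, $\psi=\Gamma'/\Gamma$ is the digamma function, and $\psi'$ is its derivative (trigamma function). A function $f$ is completely monotonic on an interval $I$ if $f$ has derivatives of all orders on $I$ and $0\le(-1)^n f^{(n)}(x)<\infty$ for all $x\in I$ and all integers $n\ge0$. *)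

(* Defs.v *)
From Stdlib Require Import Reals Factorial ClassicalEpsilon.
Open Scope R_scope.

Definition lim_seq (u : nat -> R) : R :=
  match excluded_middle_informative (exists l, Un_cv u l) with
  | left H => proj1_sig (constructive_indefinite_description _ H)
  | right _ => 0
  end.

Definition Deriv (f : R -> R) (x : R) : R :=
  match excluded_middle_informative (exists l, derivable_pt_lim f x l) with
  | left H => proj1_sig (constructive_indefinite_description _ H)
  | right _ => 0
  end.

Fixpoint poch (x : R) (n : nat) : R :=
  match n with
  | O => 1
  | S m => poch x m * (x + INR m)
  end.

(* Euler's gamma function for x > 0, via the Euler-Gauss product:
   Gamma x = lim_{n->oo} n! n^x / (x (x+1) ... (x+n)). *)
Definition Gamma (x : R) : R :=
  lim_seq (fun n => INR (fact n) * Rpower (INR n) x / poch x (S n)).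

Definition digamma (x : R) : R := Deriv Gamma x / Gamma x.
Definition trigamma (x : R) : R := Deriv digamma x.

(* Complete monotonicity on (0, oo): f has derivatives of all orders there
   (g n is the n-th derivative on (0,oo)) and 0 <= (-1)^n f^(n)(x). *)
Definition completely_monotonic_pos (f : R -> R) : Prop :=
  exists g : nat -> R -> R,
    (forall x, 0 < x -> g O x = f x) /\
    (forall n x, 0 < x -> derivable_pt_lim (g n) x (g (S n) x)) /\
    (forall n x, 0 < x -> 0 <= (-1) ^ n * g n x).

Definition F_lam (lam x : R) : R :=
  trigamma x
  - lam * (4 + 8 * x + 5 * x ^ 2) / (24 * x * (1 + x) ^ 3 * (2 + x) ^ 2)
  - (24 + 120 * x + 283 * x ^ 2 + 399 * x ^ 3 + 345 * x ^ 4 + 181 * x ^ 5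
     + 51 * x ^ 6 + 6 * x ^ 7) / (6 * x ^ 2 * (1 + x) ^ 4 * (2 + x) ^ 2).

(* Main.v *)
Require Import Defs.
From Stdlib Require Import Reals Lra Lia Psatz ClassicalEpsilon Factorial ZArith.
From Coquelicot Require Import Coquelicot.
Open Scope R_scope.

Lemma lim_seq_eq (u : nat -> R) (l : R) : Un_cv u l -> lim_seq u = l.
Proof.
  intros H. unfold lim_seq.
  destruct (excluded_middle_informative _) as [e|n].
  - destruct (constructive_indefinite_description _ e) as [l' Hl']; simpl.
    exact (UL_sequence _ _ _ Hl' H).
  - exfalso; apply n; exists l; exact H.
Qed.

Lemma Deriv_eq (f : R -> R) (x l : R) : derivable_pt_lim f x l -> Deriv f x = l.
Proof.
  intros H. unfold Deriv.
  destruct (excluded_middle_informative _) as [e|n].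
  - destruct (constructive_indefinite_description _ e) as [l' Hl']; simpl.
    exact (uniqueness_limite _ _ _ _ Hl' H).
  - exfalso; apply n; exists l; exact H.
Qed.

Lemma derivable_pt_lim_loc (f g : R -> R) (x l d : R) : 0 < d ->
  (forall y, Rabs (y - x) < d -> f y = g y) ->
  derivable_pt_lim f x l -> derivable_pt_lim g x l.
Proof.
  intros Hd Heq H eps Heps.
  destruct (H eps Heps) as [del Hdel].
  assert (Hm : 0 < Rmin del d) by (apply Rmin_pos; [apply cond_pos|lra]).
  exists (mkposreal _ Hm). intros h Hh0 Hh. simpl in Hh.
  rewrite <- (Heq (x+h)), <- (Heq x).
  - apply Hdel; auto. apply Rlt_le_trans with (1:=Hh); apply Rmin_l.
  - unfold Rminus; rewrite Rplus_opp_r, Rabs_R0; lra.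
  - replace (x + h - x) with h by ring. apply Rlt_le_trans with (1:=Hh); apply Rmin_r.
Qed.

Lemma derivable_pt_lim_shift (f : R -> R) (x c l : R) :
  derivable_pt_lim f (x + c) l -> derivable_pt_lim (fun y => f (y + c)) x l.
Proof.
  intros H eps Heps. destruct (H eps Heps) as [del Hdel].
  exists del. intros h Hh0 Hh.
  replace (x + h + c) with (x + c + h) by ring. apply Hdel; auto.
Qed.

Lemma derivable_pt_lim_sum (F F' : nat -> R -> R) (x : R) (N : nat) :
  (forall k, (k <= N)%nat -> derivable_pt_lim (F k) x (F' k x)) ->
  derivable_pt_lim (fun y => sum_f_R0 (fun k => F k y) N) x (sum_f_R0 (fun k => F' k x) N).
Proof.
  induction N as [|N IH]; intros H.
  - simpl. apply H; lia.
  - simpl. apply derivable_pt_lim_plus.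
    + apply IH; intros; apply H; lia.
    + apply H; lia.
Qed.

Notation CM := completely_monotonic_pos.

Lemma CM_ext (f h : R -> R) : (forall x, 0 < x -> f x = h x) -> CM f -> CM h.
Proof.
  intros E [g [H0 [H1 H2]]]. exists g; split; [|split]; auto.
  intros x Hx; rewrite H0; auto.
Qed.

Lemma CM_plus (f h : R -> R) : CM f -> CM h -> CM (fun x => f x + h x).
Proof.
  intros [g [H0 [H1 H2]]] [k [K0 [K1 K2]]].
  exists (fun n x => g n x + k n x); split; [|split].
  - intros x Hx; rewrite H0, K0; auto.
  - intros n x Hx; apply derivable_pt_lim_plus; auto.
  - intros n x Hx. rewrite Rmult_plus_distr_l.
    apply Rplus_le_le_0_compat; auto.
Qed.

Lemma CM_scal (c : R) (f : R -> R) : 0 <= c -> CM f -> CM (fun x => c * f x).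
Proof.
  intros Hc [g [H0 [H1 H2]]].
  exists (fun n x => c * g n x); split; [|split].
  - intros x Hx; rewrite H0; auto.
  - intros n x Hx. apply derivable_pt_lim_scal; auto.
  - intros n x Hx. replace ((-1)^n * (c * g n x)) with (c * ((-1)^n * g n x)) by ring.
    apply Rmult_le_pos; auto.
Qed.

Lemma CM_one : CM (fun _ => 1).
Proof.
  exists (fun n _ => match n with O => 1 | S _ => 0 end); split; [|split].
  - reflexivity.
  - intros [|n] x Hx; simpl; apply derivable_pt_lim_const.
  - intros [|n] x Hx; simpl; lra.
Qed.

Fixpoint binom (n k : nat) : R :=
  match n, k with
  | _, O => 1
  | O, S _ => 0
  | S n', S k' => binom n' k' + binom n' (S k')
  end.

Lemma binom_ge0 n k : 0 <= binom n k.
Proof.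
  revert k; induction n as [|n IH]; intros [|k]; simpl; try lra.
  specialize (IH k) as A; specialize (IH (S k)) as B; lra.
Qed.

Lemma binom_big n k : (n < k)%nat -> binom n k = 0.
Proof.
  revert k; induction n as [|n IH]; intros [|k] Hk; simpl; try lia; try lra.
  rewrite !IH; try lia; lra.
Qed.

Lemma leibniz_step (a b : nat -> R) (n : nat) :
  sum_f_R0 (fun k => binom n k * (a (S k) * b (n - k)%nat + a k * b (S (n - k)))) n
  = sum_f_R0 (fun k => binom (S n) k * (a k * b (S n - k)%nat)) (S n).
Proof.
  assert (E1 : sum_f_R0 (fun k => binom n k * (a (S k) * b (n - k)%nat + a k * b (S (n - k)))) n
    = sum_f_R0 (fun k => binom n k * (a (S k) * b (n - k)%nat)) n
    + sum_f_R0 (fun k => binom n k * (a k * b (S (n - k)))) n).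
  { rewrite <- sum_plus. apply sum_eq; intros; ring. }
  assert (E2 : sum_f_R0 (fun k => binom (S n) k * (a k * b (S n - k)%nat)) (S n)
     = a 0%nat * b (S n) + sum_f_R0 (fun j => binom n j * (a (S j) * b (n - j)%nat)) n
       + sum_f_R0 (fun j => binom n (S j) * (a (S j) * b (n - j)%nat)) n).
  { rewrite decomp_sum by lia. simpl pred.
    replace (binom (S n) 0 * (a 0%nat * b (S n - 0)%nat)) with (a 0%nat * b (S n)).
    2:{ rewrite Nat.sub_0_r; simpl; ring. }
    rewrite Rplus_assoc, <- sum_plus. f_equal. apply sum_eq; intros j Hj.
    simpl binom. replace (S n - S j)%nat with (n - j)%nat by lia. ring. }
  rewrite E1, E2.
  assert (E3 : sum_f_R0 (fun k => binom n k * (a k * b (S (n - k)))) n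
     = a 0%nat * b (S n) + sum_f_R0 (fun j => binom n (S j) * (a (S j) * b (n - j)%nat)) n).
  { destruct n as [|n].
    - simpl. ring.
    - rewrite decomp_sum by lia. simpl pred.
      rewrite tech5. rewrite (binom_big (S n) (S (S n))) by lia.
      replace (binom (S n) 0 * (a 0%nat * b (S (S n - 0)))) with (a 0%nat * b (S (S n))).
      2:{ rewrite Nat.sub_0_r; simpl; ring. }
      rewrite Rmult_0_l, Rplus_0_r. f_equal.
      apply sum_eq; intros j Hj. replace (S (S n - S j)) with (S n - j)%nat by lia. ring. }
  rewrite E3. ring.
Qed.

Lemma CM_mult (f h : R -> R) : CM f -> CM h -> CM (fun x => f x * h x).
Proof.
  intros [g [H0 [H1 H2]]] [k [K0 [K1 K2]]].
  exists (fun n x => sum_f_R0 (fun j => binom n j * (g j x * k (n - j)%nat x)) n).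
  split; [|split].
  - intros x Hx; simpl. rewrite H0, K0; auto. ring.
  - intros n x Hx.
    cbv beta. rewrite <- (leibniz_step (fun j => g j x) (fun j => k j x)).
    apply (derivable_pt_lim_sum (fun j y => binom n j * (g j y * k (n - j)%nat y))
              (fun j y => binom n j * (g (S j) y * k (n - j)%nat y + g j y * k (S (n - j)) y))).
    intros j Hj. apply derivable_pt_lim_scal.
    apply derivable_pt_lim_mult; auto.
  - intros n x Hx. rewrite scal_sum. apply cond_pos_sum. intros j.
    destruct (Compare_dec.le_lt_dec j n) as [Hj|Hj].
    + replace (binom n j * (g j x * k (n - j)%nat x) * (-1) ^ n)
        with (binom n j * (((-1)^j * g j x) * ((-1)^(n-j) * k (n - j)%nat x))).
      * apply Rmult_le_pos; [apply binom_ge0|apply Rmult_le_pos; auto].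
      * replace ((-1)^n) with ((-1)^j * (-1)^(n-j)).
        -- ring.
        -- rewrite <- pow_add. f_equal. lia.
    + rewrite binom_big by lia. lra.
Qed.

Lemma CM_pow (f : R -> R) (m : nat) : CM f -> CM (fun x => f x ^ m).
Proof.
  intros Hf. induction m as [|m IH].
  - apply CM_one.
  - simpl. apply CM_mult; auto.
Qed.

Lemma CM_inv_lin (a : R) : 0 <= a -> CM (fun x => / (x + a)).
Proof.
  intros Ha.
  exists (fun n x => (-1)^n * INR (fact n) * / (x + a) ^ (S n)); split; [|split].
  - intros x Hx. simpl. field. lra.
  - intros n x Hx.
    assert (Hp : 0 < x + a) by lra.
    apply is_derive_Reals. auto_derive.
    + apply Rmult_integral_contrapositive; split; [lra|apply pow_nonzero; lra].
    + change (match n with 0%nat => 1 | S _ => INR n + 1 end) with (INR (S n)).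
      rewrite fact_simpl, mult_INR. simpl pow.
      field. split; [apply pow_nonzero; lra| lra].
  - intros n x Hx.
    replace ((-1) ^ n * ((-1) ^ n * INR (fact n) * / (x + a) ^ S n))
      with (((-1) ^ n * (-1)^n) * INR (fact n) * / (x + a) ^ S n) by ring.
    rewrite <- pow_add. replace (n + n)%nat with (2 * n)%nat by lia. rewrite pow_1_even.
    apply Rmult_le_pos; [rewrite Rmult_1_l; apply pos_INR|].
    apply Rlt_le, Rinv_0_lt_compat, pow_lt; lra.
Qed.

Lemma fam_noninc (g : nat -> R -> R) :
  (forall n x, 0 < x -> derivable_pt_lim (g n) x (g (S n) x)) ->
  (forall n x, 0 < x -> 0 <= (-1) ^ n * g n x) ->
  forall n x y, 0 < x -> x <= y -> (-1) ^ n * g n y <= (-1) ^ n * g n x.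
Proof.
  intros G1 G2 n x y Hx Hxy.
  destruct (Req_dec x y) as [<-|Hne]; [lra|].
  destruct (MVT_cor2 (g n) (g (S n)) x y) as [c [Hc1 Hc2]]; [lra| |].
  - intros c Hc; apply G1; lra.
  - assert (Hs := G2 (S n) c ltac:(lra)). simpl in Hs.
    assert (E : (-1) ^ n * g n y - (-1) ^ n * g n x = - ((-1) * (-1) ^ n * g (S n) c) * (y - x)).
    { rewrite <- Rmult_minus_distr_l, Hc1. ring. }
    assert (0 <= (-1) * (-1) ^ n * g (S n) c * (y - x)) by (apply Rmult_le_pos; lra).
    lra.
Qed.

Lemma Un_cv_const (c : R) : Un_cv (fun _ => c) c.
Proof. intros eps Heps; exists 0%nat; intros; rewrite R_dist_eq; lra. Qed.

Lemma Un_cv_scal (u : nat -> R) (c l : R) : Un_cv u l -> Un_cv (fun n => c * u n) (c * l).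
Proof. intros H. apply (CV_mult (fun _ => c) u); auto. apply Un_cv_const. Qed.

Lemma Un_cv_shift (u : nat -> R) (l : R) (M : nat) : Un_cv u l -> Un_cv (fun P => u (P + M)%nat) l.
Proof.
  intros H eps Heps. destruct (H eps Heps) as [N HN]. exists N. intros n Hn. apply HN. lia.
Qed.

Lemma Un_cv_ext (u v : nat -> R) (l : R) : (forall n, u n = v n) -> Un_cv u l -> Un_cv v l.
Proof.
  intros E H eps Heps. destruct (H eps Heps) as [N HN]. exists N. intros n Hn. rewrite <- E. auto.
Qed.

Lemma sign_sq (n : nat) : (-1) ^ n * (-1) ^ n = 1.
Proof. rewrite <- pow_add. replace (n + n)%nat with (2 * n)%nat by lia. apply pow_1_even. Qed.

Lemma CM_series (f Sf : R -> R) : CM f ->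
  (forall x, 0 < x -> Un_cv (fun N => sum_f_R0 (fun k => f (x + INR k)) N) (Sf x)) ->
  CM Sf.
Proof.
  intros [g [G0 [G1 G2]]] HS.
  set (u := fun n x k => (-1) ^ n * g n (x + INR k)).
  assert (posk : forall x k, 0 < x -> 0 < x + INR k).
  { intros x k Hx. assert (0 <= INR k) by apply pos_INR. lra. }
  assert (upos : forall n x k, 0 < x -> 0 <= u n x k).
  { intros n x k Hx. apply G2. auto. }
  assert (unon : forall n x y k, 0 < x -> x <= y -> u n y k <= u n x k).
  { intros n x y k Hx Hxy. apply (fam_noninc g G1 G2); auto. lra. }
  assert (ustep : forall m x k, 0 < x -> u (S m) x (S k) <= u m x k - u m x (S k)).
  { intros m x k Hx. unfold u. rewrite S_INR.
    destruct (MVT_cor2 (g m) (g (S m)) (x + INR k) (x + (INR k + 1))) as [c [Hc1 Hc2]].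
    - lra.
    - intros c Hc; apply G1. assert (H := posk x k Hx). lra.
    - assert (H := fam_noninc g G1 G2 (S m) c (x + (INR k + 1)) ltac:(assert (H := posk x k Hx); lra) ltac:(lra)).
      simpl pow in *.
      assert (E : (-1) ^ m * g m (x + INR k) - (-1) ^ m * g m (x + (INR k + 1)) = -1 * (-1) ^ m * g (S m) c).
      { rewrite <- Rmult_minus_distr_l. replace (g m (x + INR k) - g m (x + (INR k + 1))) with
          (- (g m (x + (INR k + 1)) - g m (x + INR k))) by ring. rewrite Hc1. ring. }
      lra. }
  assert (conv : forall n x, 0 < x -> exists l, Un_cv (fun N => sum_f_R0 (u n x) N) l).
  { intros [|m] x Hx.
    - exists (Sf x). apply (Un_cv_ext (fun N => sum_f_R0 (fun k => f (x + INR k)) N)); auto.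
      intros N. apply sum_eq. intros k _. unfold u. simpl. rewrite G0; auto. ring.
    - assert (bnd : forall N, sum_f_R0 (u (S m) x) N <= u (S m) x 0%nat + u m x 0%nat - u m x N).
      { induction N as [|N IH].
        - simpl. lra.
        - rewrite tech5. assert (H := ustep m x N Hx). lra. }
      destruct (growing_cv (fun N => sum_f_R0 (u (S m) x) N)) as [l Hl].
      + intros N. simpl. assert (H := upos (S m) x (S N) Hx). lra.
      + exists (u (S m) x 0%nat + u m x 0%nat). intros z [i ->].
        assert (H := bnd i). assert (H' := upos m x i Hx). lra.
      + exists l; exact Hl. }
  set (G := fun n x => lim_seq (fun N => sum_f_R0 (fun k => g n (x + INR k)) N)).
  assert (Gcv : forall n x, 0 < x -> exists l, Un_cv (fun N => sum_f_R0 (u n x) N) l /\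
       Un_cv (fun N => sum_f_R0 (fun k => g n (x + INR k)) N) ((-1) ^ n * l) /\
       G n x = (-1) ^ n * l /\ 0 <= l).
  { intros n x Hx. destruct (conv n x Hx) as [l Hl].
    assert (H2 : Un_cv (fun N => sum_f_R0 (fun k => g n (x + INR k)) N) ((-1) ^ n * l)).
    { apply (Un_cv_ext (fun N => (-1) ^ n * sum_f_R0 (u n x) N)).
      - intros N. rewrite scal_sum. apply sum_eq. intros k _. unfold u.
        rewrite (Rmult_comm _ ((-1)^n)), <- Rmult_assoc, sign_sq. ring.
      - apply Un_cv_scal; auto. }
    exists l; split; [auto|split; [auto|split]].
    - apply lim_seq_eq; auto.
    - apply (@Rle_cv_lim (fun _ => 0) (fun N => sum_f_R0 (u n x) N) 0 l);
        [intros N; apply cond_pos_sum; intros k; apply upos; auto | apply Un_cv_const | exact Hl]. }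
  exists G. split; [|split].
  - intros x Hx. unfold G. apply lim_seq_eq.
    apply (Un_cv_ext (fun N => sum_f_R0 (fun k => f (x + INR k)) N)); auto.
    intros N. apply sum_eq. intros k _. rewrite G0; auto.
  - intros n x Hx.
    assert (Hd : 0 < x / 2) by lra.
    set (d := mkposreal _ Hd).
    assert (inb : forall y, Boule x d y -> x / 2 < y).
    { intros y Hy. unfold Boule in Hy. simpl in Hy. apply Rabs_def2 in Hy. lra. }
    apply (CVU_derivable (fun N y => sum_f_R0 (fun k => g n (y + INR k)) N)
                         (fun N y => sum_f_R0 (fun k => g (S n) (y + INR k)) N)
                         (G n) (G (S n)) x d).
    + intros eps Heps.
      destruct (Gcv (S n) (x / 2) Hd) as [l2 [Hl2 _]].
      destruct (Hl2 eps Heps) as [N HN]. exists N. intros M y HM Hy.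
      assert (Hy0 := inb y Hy).
      destruct (Gcv (S n) y ltac:(lra)) as [l1 [Hl1 [Hg1 [HG1 _]]]].
      assert (E : G (S n) y - sum_f_R0 (fun k => g (S n) (y + INR k)) M
                  = (-1) ^ S n * (l1 - sum_f_R0 (u (S n) y) M)).
      { rewrite HG1, Rmult_minus_distr_l. f_equal. rewrite scal_sum. apply sum_eq.
        intros k _. unfold u. rewrite (Rmult_comm _ ((-1)^S n)), <- Rmult_assoc, sign_sq. ring. }
      rewrite E, Rabs_mult, pow_1_abs, Rmult_1_l.
      assert (T1 : sum_f_R0 (u (S n) y) M <= l1).
      { apply growing_ineq; auto. intros P. simpl. assert (H := upos (S n) y (S P) ltac:(lra)). lra. }
      assert (T2 : l1 - sum_f_R0 (u (S n) y) M <= l2 - sum_f_R0 (u (S n) (x/2)) M).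
      { apply (@Rle_cv_lim (fun P => sum_f_R0 (u (S n) y) (P + M) - sum_f_R0 (u (S n) y) M)
                          (fun P => sum_f_R0 (u (S n) (x/2)) (P + M) - sum_f_R0 (u (S n) (x/2)) M)).
        - induction n0 as [|P IH].
          + simpl. lra.
          + simpl (S P + M)%nat. rewrite !tech5.
            assert (H := unon (S n) (x/2) y (S (P + M)) Hd ltac:(lra)). lra.
        - apply CV_minus; [apply (Un_cv_shift (fun N => sum_f_R0 (u (S n) y) N)); auto|apply Un_cv_const].
        - apply CV_minus; [apply (Un_cv_shift (fun N => sum_f_R0 (u (S n) (x/2)) N)); auto|apply Un_cv_const]. }
      specialize (HN M HM). unfold R_dist in HN.
      rewrite Rabs_pos_eq by lra. apply Rabs_def2 in HN. lra.
    + intros y Hy. destruct (Gcv n y ltac:(assert (H := inb y Hy); lra)) as [l [_ [H1 [H2 _]]]].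
      rewrite H2. auto.
    + intros N y Hy. apply (derivable_pt_lim_sum (fun k z => g n (z + INR k)) (fun k z => g (S n) (z + INR k))).
      intros k _. apply derivable_pt_lim_shift. apply G1. apply posk. assert (H := inb y Hy). lra.
    + apply Boule_center.
  - intros n x Hx. destruct (Gcv n x Hx) as [l [_ [_ [H1 H2]]]].
    rewrite H1, <- Rmult_assoc, sign_sq. lra.
Qed.

Lemma ln_le_xm1 (w : R) : 0 < w -> ln w <= w - 1.
Proof.
  intros Hw. destruct (Rle_or_lt (ln w) (w - 1)) as [H|H]; auto.
  apply exp_increasing in H. rewrite exp_ln in H by auto.
  assert (H2 := exp_ineq1_le (w - 1)). lra.
Qed.

Lemma ln_diff_le (a b : R) : 0 < a -> 0 < b -> ln b - ln a <= (b - a) / a.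
Proof.
  intros Ha Hb. replace (ln b - ln a) with (ln (b / a)).
  - replace ((b - a) / a) with (b / a - 1) by (field; lra).
    apply ln_le_xm1. apply Rdiv_lt_0_compat; auto.
  - unfold Rdiv. rewrite ln_mult, ln_Rinv; auto. apply Rinv_0_lt_compat; auto.
Qed.

Lemma ln_diff_ge (a b : R) : 0 < a -> 0 < b -> (b - a) / b <= ln b - ln a.
Proof.
  intros Ha Hb. assert (H := ln_diff_le b a Hb Ha).
  replace ((b - a) / b) with (- ((a - b) / b)) by (field; lra). lra.
Qed.

Definition UC (h : nat -> R -> R) : Prop :=
  forall B eps, 0 < eps -> exists N, forall n m y, (N <= n)%nat -> (N <= m)%nat ->
    0 < y < B -> Rabs (h n y - h m y) < eps.

Lemma UC_integrate (h h' : nat -> R -> R) :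
  (forall n y, 0 < y -> derivable_pt_lim (h n) y (h' n y)) ->
  Cauchy_crit (fun n => h n 1) -> UC h' -> UC h.
Proof.
  intros Hd Hc Hu B eps Heps.
  set (B' := Rmax B 2).
  assert (HB1 : B <= B') by apply Rmax_l. assert (HB2 : 2 <= B') by apply Rmax_r.
  destruct (Hc (eps / 2) ltac:(lra)) as [N1 HN1].
  destruct (Hu B' (eps / (2 * B')) ltac:(apply Rdiv_lt_0_compat; lra)) as [N2 HN2].
  exists (max N1 N2). intros n m y Hn Hm Hy.
  assert (C1 := HN1 n m ltac:(lia) ltac:(lia)). unfold R_dist in C1.
  assert (key : Rabs ((h n y - h m y) - (h n 1 - h m 1)) <= eps / 2).
  { destruct (Req_dec y 1) as [->|Hy1].
    - unfold Rminus at 1. rewrite Rplus_opp_r, Rabs_R0. lra.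
    - set (a := Rmin y 1). set (b := Rmax y 1).
      assert (Hab : a < b).
      { unfold a, b, Rmin, Rmax. destruct (Rle_dec y 1); lra. }
      assert (Ha : 0 < a) by (unfold a, Rmin; destruct (Rle_dec y 1); lra).
      assert (Hb : b < B') by (unfold b, Rmax; destruct (Rle_dec y 1); lra).
      destruct (MVT_cor2 (fun z => h n z - h m z) (fun z => h' n z - h' m z) a b Hab)
        as [c [Hm1 Hm2]].
      { intros c0 Hc0. apply derivable_pt_lim_minus; apply Hd; lra. }
      assert (Hc3 : Rabs (h' n c - h' m c) < eps / (2 * B')).
      { apply HN2; try lia. lra. }
      assert (E : Rabs ((h n y - h m y) - (h n 1 - h m 1)) = Rabs (h' n c - h' m c) * (b - a)).
      { assert (E2 : Rabs ((h n y - h m y) - (h n 1 - h m 1)) = Rabs ((h n b - h m b) - (h n a - h m a))).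
        { unfold a, b, Rmin, Rmax. destruct (Rle_dec y 1).
          - rewrite <- Rabs_Ropp. f_equal. ring.
          - reflexivity. }
        rewrite E2, Hm1, Rabs_mult, (Rabs_pos_eq (b - a)) by lra. reflexivity. }
      rewrite E.
      assert (Hba : b - a <= B') by lra.
      apply Rle_trans with (eps / (2 * B') * B').
      + apply Rmult_le_compat; try lra. apply Rabs_pos.
      + apply Req_le. field. lra. }
  replace (h n y - h m y) with (((h n y - h m y) - (h n 1 - h m 1)) + (h n 1 - h m 1)) by ring.
  eapply Rle_lt_trans. apply Rabs_triang. lra.
Qed.

Lemma UC_lim (h : nat -> R -> R) : UC h -> forall y, 0 < y -> Un_cv (fun n => h n y) (lim_seq (fun n => h n y)).
Proof.
  intros Hu y Hy.
  destruct (Stdlib.Reals.Rcomplete.R_complete (fun n => h n y)) as [l Hl].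
  - intros eps Heps. destruct (Hu (y + 1) eps Heps) as [N HN]. exists N.
    intros n m Hn Hm. unfold R_dist. apply HN; auto. lra.
  - rewrite (lim_seq_eq _ l Hl). exact Hl.
Qed.

Lemma lim_deriv (h h' : nat -> R -> R) (H H' : R -> R) :
  (forall n y, 0 < y -> derivable_pt_lim (h n) y (h' n y)) ->
  (forall y, 0 < y -> Un_cv (fun n => h n y) (H y)) ->
  UC h' -> (forall y, 0 < y -> Un_cv (fun n => h' n y) (H' y)) ->
  forall x, 0 < x -> derivable_pt_lim H x (H' x).
Proof.
  intros Hd Hc Hu Hc' x Hx.
  assert (Hd2 : 0 < x / 2) by lra. set (d := mkposreal _ Hd2).
  assert (inb : forall y, Boule x d y -> x / 2 < y < 2 * x).
  { intros y Hy. unfold Boule in Hy. simpl in Hy. apply Rabs_def2 in Hy. lra. }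
  apply (CVU_derivable h h' H H' x d).
  - intros eps Heps. destruct (Hu (2 * x) (eps / 2) ltac:(lra)) as [N HN].
    exists N. intros n y Hn Hy. assert (Hy2 := inb y Hy).
    destruct (Hc' y ltac:(lra) (eps / 2) ltac:(lra)) as [M HM].
    assert (A1 := HM (max N M) ltac:(lia)). unfold R_dist in A1.
    assert (A2 := HN (max N M) n y ltac:(lia) Hn ltac:(lra)).
    replace (H' y - h' n y) with (- (h' (max N M) y - H' y) + (h' (max N M) y - h' n y)) by ring.
    eapply Rle_lt_trans. apply Rabs_triang. rewrite Rabs_Ropp. lra.
  - intros y Hy. apply Hc. assert (H2 := inb y Hy). lra.
  - intros n y Hy. apply Hd. assert (H2 := inb y Hy). lra.
  - apply Boule_center.
Qed.

Definition Lfun (n : nat) (y : R) : R :=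
  ln (INR (fact n)) + y * ln (INR n) - sum_f_R0 (fun k => ln (y + INR k)) n.
Definition Mfun (n : nat) (y : R) : R :=
  ln (INR n) - sum_f_R0 (fun k => / (y + INR k)) n.
Definition Tfun (n : nat) (y : R) : R :=
  sum_f_R0 (fun k => / (y + INR k) ^ 2) n.

Lemma posk' (y : R) (k : nat) : 0 < y -> 0 < y + INR k.
Proof. intros. assert (0 <= INR k) by apply pos_INR. lra. Qed.

Lemma deriv_lin (c y : R) : derivable_pt_lim (fun z => z * c) y c.
Proof. apply is_derive_Reals. auto_derive; auto. ring. Qed.

Lemma Lfun_deriv n y : 0 < y -> derivable_pt_lim (Lfun n) y (Mfun n y).
Proof.
  intros Hy. unfold Lfun, Mfun.
  replace (ln (INR n) - sum_f_R0 (fun k => / (y + INR k)) n) with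
    (0 + (1 * ln (INR n)) - sum_f_R0 (fun k => / (y + INR k)) n) by ring.
  apply derivable_pt_lim_minus.
  - apply derivable_pt_lim_plus. apply derivable_pt_lim_const.
    rewrite Rmult_1_l. apply deriv_lin.
  - apply (derivable_pt_lim_sum (fun k z => ln (z + INR k)) (fun k z => / (z + INR k))).
    intros k _. apply derivable_pt_lim_shift. apply derivable_pt_lim_ln. apply posk'; auto.
Qed.

Lemma sum_opp' (f : nat -> R) n : sum_f_R0 (fun k => - f k) n = - sum_f_R0 f n.
Proof. induction n; simpl; [ring|rewrite IHn; ring]. Qed.

Lemma Mfun_deriv n y : 0 < y -> derivable_pt_lim (Mfun n) y (Tfun n y).
Proof.
  intros Hy. unfold Mfun, Tfun.
  replace (sum_f_R0 (fun k => / (y + INR k) ^ 2) n) with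
    (0 - sum_f_R0 (fun k => - / (y + INR k) ^ 2) n) by (rewrite sum_opp'; ring).
  apply derivable_pt_lim_minus. apply derivable_pt_lim_const.
  apply (derivable_pt_lim_sum (fun k z => / (z + INR k)) (fun k z => - / (z + INR k) ^ 2)).
  intros k _. assert (H := posk' y k Hy).
  apply is_derive_Reals. auto_derive. lra. field. lra.
Qed.

Lemma Tfun_mono n P y : 0 < y -> Tfun n y <= Tfun (n + P) y.
Proof.
  intros Hy. induction P as [|P IH].
  - rewrite Nat.add_0_r; lra.
  - replace (n + S P)%nat with (S (n + P)) by lia. unfold Tfun in *. rewrite tech5.
    assert (0 < / (y + INR (S (n + P))) ^ 2).
    { apply Rinv_0_lt_compat, pow_lt, posk'; auto. }
    lra.
Qed.

Lemma Tfun_tail n P y : 0 < y -> (1 <= n)%nat ->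
  Tfun (n + P) y - Tfun n y <= / INR n - / INR (n + P).
Proof.
  intros Hy Hn. induction P as [|P IH].
  - rewrite Nat.add_0_r; lra.
  - replace (n + S P)%nat with (S (n + P)) by lia. unfold Tfun in *. rewrite tech5.
    set (K := INR (n + P)) in *.
    assert (HK : 1 <= K) by (unfold K; apply (le_INR 1); lia).
    rewrite S_INR. fold K.
    assert (Hb : / (y + (K + 1)) ^ 2 <= / K - / (K + 1)).
    { replace (/ K - / (K + 1)) with (/ (K * (K + 1))) by (field; lra).
      apply Rinv_le_contravar. nra. nra. }
    lra.
Qed.

Lemma Tfun_UC : UC Tfun.
Proof.
  intros B eps Heps.
  destruct (archimed (/ eps)) as [Ha _].
  set (N := S (Z.to_nat (up (/ eps)))).
  assert (HN : / eps < INR N).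
  { unfold N. rewrite S_INR, INR_IZR_INZ, Z2Nat.id.
    - lra.
    - apply le_IZR. assert (0 < / eps) by (apply Rinv_0_lt_compat; auto). lra. }
  exists N. intros n m y Hn Hm Hy.
  assert (main : forall a b, (N <= a)%nat -> (a <= b)%nat -> Rabs (Tfun b y - Tfun a y) < eps).
  { intros a b Ha' Hab. replace b with (a + (b - a))%nat by lia.
    assert (H1 := Tfun_mono a (b - a) y ltac:(lra)).
    assert (H2 := Tfun_tail a (b - a) y ltac:(lra) ltac:(unfold N in Ha'; lia)).
    rewrite Rabs_pos_eq by lra.
    assert (Ha2 : INR N <= INR a) by (apply le_INR; auto).
    assert (0 < INR (a + (b - a))) by (apply (lt_INR 0); unfold N in Ha'; lia).
    assert (0 < / INR (a + (b - a))) by (apply Rinv_0_lt_compat; auto).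
    assert (/ INR a < eps).
    { assert (0 < / eps) by (apply Rinv_0_lt_compat; auto).
      rewrite <- (Rinv_inv eps). apply Rinv_lt_contravar; nra. }
    lra. }
  destruct (Compare_dec.le_lt_dec n m) as [H|H].
  - rewrite <- Rabs_Ropp. replace (- (Tfun n y - Tfun m y)) with (Tfun m y - Tfun n y) by ring.
    apply main; lia.
  - apply main; lia.
Qed.

Lemma archi_inv (eps : R) : 0 < eps -> exists N, (1 <= N)%nat /\ forall n, (N <= n)%nat -> / INR n < eps.
Proof.
  intros Heps.
  destruct (archimed (/ eps)) as [Ha _].
  set (N := S (Z.to_nat (up (/ eps)))).
  assert (HN : / eps < INR N).
  { unfold N. rewrite S_INR, INR_IZR_INZ, Z2Nat.id.
    - lra.
    - apply le_IZR. assert (0 < / eps) by (apply Rinv_0_lt_compat; auto). lra. }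
  exists N. split; [unfold N; lia|]. intros n Hn.
  assert (Ha2 : INR N <= INR n) by (apply le_INR; auto).
  assert (0 < / eps) by (apply Rinv_0_lt_compat; auto).
  rewrite <- (Rinv_inv eps). apply Rinv_lt_contravar; nra.
Qed.

Lemma Un_cv_unshift (u : nat -> R) (l : R) : Un_cv (fun n => u (S n)) l -> Un_cv u l.
Proof.
  intros H eps Heps. destruct (H eps Heps) as [N HN]. exists (S N).
  intros n Hn. destruct n as [|n]; [lia|]. apply HN. lia.
Qed.

Lemma ln_le_H n : ln (INR (S n)) <= sum_f_R0 (fun k => / (1 + INR k)) n - / (1 + INR n).
Proof.
  induction n as [|n IH].
  - simpl. rewrite ln_1. lra.
  - rewrite tech5.
    assert (H := ln_diff_le (INR (S n)) (INR (S (S n))) ltac:(apply (lt_INR 0); lia) ltac:(apply (lt_INR 0); lia)).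
    rewrite !S_INR in *.
    replace (INR n + 1 + 1 - (INR n + 1)) with 1 in H by ring.
    replace (1 + (INR n + 1)) with (INR n + 1 + 1) by ring.
    assert (0 < / (INR n + 1 + 1)) by (apply Rinv_0_lt_compat; assert (0 <= INR n) by apply pos_INR; lra).
    replace (1 + INR n) with (INR n + 1) in IH by ring.
    unfold Rdiv in H. rewrite Rmult_1_l in H. lra.
Qed.

Lemma Mfun1_cauchy : Cauchy_crit (fun n => Mfun n 1).
Proof.
  apply CV_Cauchy.
  destruct (growing_cv (fun n => Mfun (S n) 1)) as [l Hl].
  - intros n. unfold Mfun. rewrite (tech5 _ (S n)).
    assert (H := ln_diff_ge (INR (S n)) (INR (S (S n))) ltac:(apply (lt_INR 0); lia) ltac:(apply (lt_INR 0); lia)).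
    rewrite !S_INR in *.
    replace (INR n + 1 + 1 - (INR n + 1)) with 1 in H by ring.
    assert (0 <= INR n) by apply pos_INR.
    assert (/ (1 + (INR n + 1 + 1)) <= 1 / (INR n + 1 + 1)).
    { unfold Rdiv. rewrite Rmult_1_l. apply Rinv_le_contravar; lra. }
    lra.
  - exists 0. intros z [i ->]. unfold Mfun. rewrite tech5.
    assert (H := ln_le_H i).
    assert (0 < / (1 + INR (S i))) by (apply Rinv_0_lt_compat; assert (0 <= INR (S i)) by apply pos_INR; lra).
    assert (0 < / (1 + INR i)) by (apply Rinv_0_lt_compat; assert (0 <= INR i) by apply pos_INR; lra).
    lra.
  - exists l. apply Un_cv_unshift. exact Hl.
Qed.

Lemma sum_ln_fact n : sum_f_R0 (fun k => ln (1 + INR k)) n = ln (INR (fact (S n))).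
Proof.
  induction n as [|n IH].
  - simpl. f_equal. ring.
  - rewrite tech5, IH. rewrite (fact_simpl (S n)), mult_INR.
    rewrite ln_mult.
    + rewrite Rplus_comm. f_equal. f_equal. rewrite (S_INR (S n)). ring.
    + apply (lt_INR 0). lia.
    + apply INR_fact_lt_0.
Qed.

Lemma Lfun1_cauchy : Cauchy_crit (fun n => Lfun n 1).
Proof.
  apply CV_Cauchy. exists 0.
  intros eps Heps. destruct (archi_inv eps Heps) as [N [HN1 HN]].
  exists N. intros n Hn. unfold R_dist, Lfun.
  rewrite Rmult_1_l, sum_ln_fact, fact_simpl, mult_INR, ln_mult.
  2:{ apply (lt_INR 0). lia. }
  2:{ apply INR_fact_lt_0. }
  assert (H := ln_diff_le (INR n) (INR (S n)) ltac:(apply (lt_INR 0); lia) ltac:(apply (lt_INR 0); lia)).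
  assert (H' := ln_diff_ge (INR n) (INR (S n)) ltac:(apply (lt_INR 0); lia) ltac:(apply (lt_INR 0); lia)).
  rewrite S_INR in H, H'. replace (INR n + 1 - INR n) with 1 in H, H' by ring.
  assert (Hn' := HN n Hn).
  assert (0 < 1 / (INR n + 1)) by (apply Rdiv_lt_0_compat; [lra|]; assert (0 <= INR n) by apply pos_INR; lra).
  rewrite Rminus_0_r, Rabs_left1; rewrite ?S_INR in *; lra.
Qed.

Definition Tlim y := lim_seq (fun n => Tfun n y).
Definition Mlim y := lim_seq (fun n => Mfun n y).
Definition Llim y := lim_seq (fun n => Lfun n y).

Lemma Mfun_UC : UC Mfun.
Proof. exact (UC_integrate Mfun Tfun Mfun_deriv Mfun1_cauchy Tfun_UC). Qed.
Lemma Lfun_UC : UC Lfun.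
Proof. exact (UC_integrate Lfun Mfun Lfun_deriv Lfun1_cauchy Mfun_UC). Qed.

Lemma Mlim_deriv x : 0 < x -> derivable_pt_lim Mlim x (Tlim x).
Proof. exact (lim_deriv Mfun Tfun Mlim Tlim Mfun_deriv (UC_lim Mfun Mfun_UC) Tfun_UC (UC_lim Tfun Tfun_UC) x). Qed.
Lemma Llim_deriv x : 0 < x -> derivable_pt_lim Llim x (Mlim x).
Proof. exact (lim_deriv Lfun Mfun Llim Mlim Lfun_deriv (UC_lim Lfun Lfun_UC) Mfun_UC (UC_lim Mfun Mfun_UC) x). Qed.

Lemma poch_exp y n : 0 < y -> poch y (S n) = exp (sum_f_R0 (fun k => ln (y + INR k)) n).
Proof.
  intros Hy. induction n as [|n IH].
  - simpl. rewrite Rplus_0_r, Rmult_1_l, exp_ln; auto.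
  - change (poch y (S (S n))) with (poch y (S n) * (y + INR (S n))).
    rewrite IH, tech5, exp_plus, exp_ln; auto. apply posk'; auto.
Qed.

Lemma Gamma_seq y n : 0 < y -> INR (fact n) * Rpower (INR n) y / poch y (S n) = exp (Lfun n y).
Proof.
  intros Hy. rewrite poch_exp by auto. unfold Lfun, Rpower, Rminus.
  rewrite !exp_plus, exp_Ropp, exp_ln by apply INR_fact_lt_0. unfold Rdiv. ring.
Qed.

Lemma Gamma_val y : 0 < y -> Gamma y = exp (Llim y).
Proof.
  intros Hy. unfold Gamma. apply lim_seq_eq.
  apply (Un_cv_ext (fun n => exp (Lfun n y))).
  - intros n. rewrite Gamma_seq; auto.
  - apply (continuity_seq exp (fun n => Lfun n y)).
    + apply derivable_continuous_pt. apply derivable_pt_exp.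
    + apply UC_lim; auto. apply Lfun_UC.
Qed.

Lemma Gamma_deriv y : 0 < y -> derivable_pt_lim Gamma y (exp (Llim y) * Mlim y).
Proof.
  intros Hy. apply (derivable_pt_lim_loc (fun z => exp (Llim z)) _ _ _ (y / 2)); [lra| |].
  - intros z Hz. apply Rabs_def2 in Hz. rewrite Gamma_val; auto. lra.
  - apply (derivable_pt_lim_comp Llim exp). apply Llim_deriv; auto. apply derivable_pt_lim_exp.
Qed.

Lemma digamma_val y : 0 < y -> digamma y = Mlim y.
Proof.
  intros Hy. unfold digamma. rewrite (Deriv_eq _ _ _ (Gamma_deriv y Hy)), Gamma_val by auto.
  field. apply Rgt_not_eq, exp_pos.
Qed.

Lemma trigamma_val x : 0 < x -> trigamma x = Tlim x.
Proof.
  intros Hx. unfold trigamma. apply Deriv_eq.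
  apply (derivable_pt_lim_loc Mlim _ _ _ (x / 2)); [lra| |].
  - intros z Hz. apply Rabs_def2 in Hz. rewrite digamma_val; auto. lra.
  - apply Mlim_deriv; auto.
Qed.

Lemma trigamma_cv x : 0 < x -> Un_cv (fun n => sum_f_R0 (fun k => / (x + INR k) ^ 2) n) (trigamma x).
Proof.
  intros Hx. rewrite trigamma_val by auto. apply (UC_lim Tfun Tfun_UC x Hx).
Qed.

Definition Pt (i j k l : nat) (x : R) : R := / (x ^ i * (x + 1) ^ j * (x + 2) ^ k * (x + 3) ^ l).

Lemma CM_Pt i j k l : CM (Pt i j k l).
Proof.
  apply (CM_ext (fun x => ((/ (x + 0)) ^ i * (/ (x + 1)) ^ j) * ((/ (x + 2)) ^ k * (/ (x + 3)) ^ l))).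
  - intros x Hx. unfold Pt. rewrite Rplus_0_r, !pow_inv, !Rinv_mult. ring.
  - apply CM_mult; apply CM_mult; apply CM_pow; apply CM_inv_lin; lra.
Qed.

Definition Afun (x : R) : R := (4 + 8 * x + 5 * x ^ 2) / (24 * x * (1 + x) ^ 3 * (2 + x) ^ 2).
Definition Bfun (x : R) : R := (24 + 120 * x + 283 * x ^ 2 + 399 * x ^ 3 + 345 * x ^ 4 + 181 * x ^ 5
     + 51 * x ^ 6 + 6 * x ^ 7) / (6 * x ^ 2 * (1 + x) ^ 4 * (2 + x) ^ 2).

Definition mDA (x : R) : R := Afun x - Afun (x + 1).
Definition DB (x : R) : R := / x ^ 2 - Bfun x + Bfun (x + 1).
Definition mD4 (x : R) : R := 4 * mDA x - DB x.

Lemma mDA_cert x : 0 < x -> mDA x = 1/6 * Pt 1 3 3 2 x + 13/24 * Pt 1 1 1 2 x + 1/12 * Pt 1 0 3 1 x + 5/24 * Pt 1 0 2 2 x.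
Proof. intros Hx. unfold mDA, Afun, Pt. field. lra. Qed.

Lemma DB_cert x : 0 < x -> DB x = 4 * Pt 0 4 3 3 x + 4 * Pt 0 3 4 4 x + 1/6 * Pt 0 1 3 4 x + 1/3 * Pt 0 1 3 3 x
   + 1/2 * Pt 0 1 0 4 x + 2/3 * Pt 0 0 4 4 x + 17/6 * Pt 0 0 4 1 x.
Proof. intros Hx. unfold DB, Bfun, Pt. field. lra. Qed.

Lemma mD4_cert x : 0 < x -> mD4 x = 9/2 * Pt 1 4 3 2 x + 31/12 * Pt 1 3 4 2 x + 19/12 * Pt 1 0 4 1 x
   + 23/6 * Pt 1 0 3 2 x + 13/12 * Pt 0 4 1 1 x + 1/3 * Pt 0 4 0 2 x.
Proof. intros Hx. unfold mD4, mDA, DB, Afun, Bfun, Pt. field. lra. Qed.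

Ltac cm_comb := repeat (apply CM_plus); apply CM_scal; try lra; apply CM_Pt.

Lemma CM_mDA : CM mDA.
Proof. eapply CM_ext. intros x Hx; symmetry; apply mDA_cert; auto. repeat apply CM_plus; apply CM_scal; try lra; apply CM_Pt. Qed.
Lemma CM_DB : CM DB.
Proof. eapply CM_ext. intros x Hx; symmetry; apply DB_cert; auto. repeat apply CM_plus; apply CM_scal; try lra; apply CM_Pt. Qed.
Lemma CM_mD4 : CM mD4.
Proof. eapply CM_ext. intros x Hx; symmetry; apply mD4_cert; auto. repeat apply CM_plus; apply CM_scal; try lra; apply CM_Pt. Qed.

Lemma cv0_term (x a c : R) (m : nat) : 0 < x -> 0 <= a -> (1 <= m)%nat ->
  Un_cv (fun N => c * / (x + INR N + 1 + a) ^ m) 0.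
Proof.
  intros Hx Ha Hm eps Heps.
  destruct (archi_inv (eps / (Rabs c + 1))) as [N0 [HN1 HN]].
  { apply Rdiv_lt_0_compat; [lra|]. assert (0 <= Rabs c) by apply Rabs_pos. lra. }
  exists N0. intros n Hn. unfold R_dist. rewrite Rminus_0_r.
  set (y := x + INR n + 1 + a).
  assert (Hn1 : 1 <= INR n) by (apply (le_INR 1); lia).
  assert (Hy : INR n <= y) by (unfold y; lra).
  assert (Hym : y <= y ^ m).
  { destruct m as [|m]; [lia|]. simpl. rewrite <- (Rmult_1_r y) at 1.
    apply Rmult_le_compat_l; [lra|]. apply pow_R1_Rle. lra. }
  assert (Hinv : / y ^ m <= / INR n).
  { apply Rinv_le_contravar; lra. }
  assert (Hpos : 0 < / y ^ m) by (apply Rinv_0_lt_compat; apply pow_lt; lra).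
  rewrite Rabs_mult, (Rabs_pos_eq (/ y ^ m)) by lra.
  assert (H2 := HN n Hn).
  assert (Hc : 0 <= Rabs c) by apply Rabs_pos.
  apply Rle_lt_trans with ((Rabs c + 1) * / INR n).
  - apply Rmult_le_compat; lra.
  - assert (0 < Rabs c + 1) by lra.
    replace eps with ((Rabs c + 1) * (eps / (Rabs c + 1))) by (field; lra).
    apply Rmult_lt_compat_l; auto.
Qed.

Lemma Afun_cv0 x : 0 < x -> Un_cv (fun N => Afun (x + INR N + 1)) 0.
Proof.
  intros Hx.
  apply (Un_cv_ext (fun N => (1/24) * / (x + INR N + 1 + 0) ^ 1 + (-1/24) * / (x + INR N + 1 + 1) ^ 3
      + (1/8) * / (x + INR N + 1 + 1) ^ 2 + (-3/8) * / (x + INR N + 1 + 1) ^ 1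
      + (1/6) * / (x + INR N + 1 + 2) ^ 2 + (1/3) * / (x + INR N + 1 + 2) ^ 1)).
  - intros N. assert (0 <= INR N) by apply pos_INR. unfold Afun. field. lra.
  - replace 0 with (0 + 0 + 0 + 0 + 0 + 0) by ring.
    repeat apply CV_plus; apply cv0_term; auto; lra || lia.
Qed.

Lemma Bfun_cv0 x : 0 < x -> Un_cv (fun N => Bfun (x + INR N + 1)) 0.
Proof.
  intros Hx.
  apply (Un_cv_ext (fun N => 1 * / (x + INR N + 1 + 0) ^ 2 + (-1/2) * / (x + INR N + 1 + 1) ^ 4
      + 2 * / (x + INR N + 1 + 1) ^ 3 + (-7/2) * / (x + INR N + 1 + 1) ^ 2
      + (43/6) * / (x + INR N + 1 + 1) ^ 1
      + (-13/6) * / (x + INR N + 1 + 2) ^ 2 + (-37/6) * / (x + INR N + 1 + 2) ^ 1)).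
  - intros N. assert (0 <= INR N) by apply pos_INR. unfold Bfun. field. lra.
  - replace 0 with (0 + 0 + 0 + 0 + 0 + 0 + 0) by ring.
    repeat apply CV_plus; apply cv0_term; auto; lra || lia.
Qed.

Lemma sum_mDA x N : sum_f_R0 (fun k => mDA (x + INR k)) N = Afun x - Afun (x + INR N + 1).
Proof.
  induction N as [|N IH].
  - simpl. unfold mDA. rewrite Rplus_0_r. reflexivity.
  - rewrite tech5, IH. unfold mDA. rewrite S_INR. replace (x + (INR N + 1)) with (x + INR N + 1) by ring. ring.
Qed.

Lemma sum_DB x N : sum_f_R0 (fun k => DB (x + INR k)) N = Tfun N x - Bfun x + Bfun (x + INR N + 1).
Proof.
  induction N as [|N IH].
  - simpl. unfold DB, Tfun. simpl. rewrite Rplus_0_r. ring.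
  - rewrite tech5, IH. unfold DB, Tfun. rewrite tech5. rewrite S_INR.
    replace (x + (INR N + 1)) with (x + INR N + 1) by ring. ring.
Qed.

Definition F0 (x : R) : R := trigamma x - Bfun x.

Lemma F0_cv x : 0 < x -> Un_cv (fun N => sum_f_R0 (fun k => DB (x + INR k)) N) (F0 x).
Proof.
  intros Hx. apply (Un_cv_ext (fun N => (Tfun N x - Bfun x) + Bfun (x + INR N + 1))).
  - intros N. rewrite sum_DB. ring.
  - replace (F0 x) with ((trigamma x - Bfun x) + 0) by (unfold F0; ring).
    apply CV_plus; [apply CV_minus; [apply trigamma_cv; auto|apply Un_cv_const]|apply Bfun_cv0; auto].
Qed.

Lemma A_cv x : 0 < x -> Un_cv (fun N => sum_f_R0 (fun k => mDA (x + INR k)) N) (Afun x).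
Proof.
  intros Hx. apply (Un_cv_ext (fun N => Afun x - Afun (x + INR N + 1))).
  - intros N. rewrite sum_mDA. ring.
  - assert (H := CV_minus _ _ _ _ (Un_cv_const (Afun x)) (Afun_cv0 x Hx)).
    rewrite Rminus_0_r in H. exact H.
Qed.

Lemma sum_lin (f g : nat -> R) (a : R) N :
  sum_f_R0 (fun k => a * f k - g k) N = a * sum_f_R0 f N - sum_f_R0 g N.
Proof. induction N as [|N IH]; simpl; [ring|rewrite IH; ring]. Qed.

Lemma mF4_cv x : 0 < x -> Un_cv (fun N => sum_f_R0 (fun k => mD4 (x + INR k)) N) (4 * Afun x - F0 x).
Proof.
  intros Hx. apply (Un_cv_ext (fun N => 4 * sum_f_R0 (fun k => mDA (x + INR k)) N - sum_f_R0 (fun k => DB (x + INR k)) N)).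
  - intros N. unfold mD4. rewrite sum_lin. reflexivity.
  - apply CV_minus; [apply Un_cv_scal, A_cv; auto|apply F0_cv; auto].
Qed.

Lemma CM_F0 : CM F0.
Proof. exact (CM_series DB F0 CM_DB F0_cv). Qed.
Lemma CM_A : CM Afun.
Proof. exact (CM_series mDA Afun CM_mDA A_cv). Qed.
Lemma CM_mF4 : CM (fun x => 4 * Afun x - F0 x).
Proof. exact (CM_series mD4 _ CM_mD4 mF4_cv). Qed.

Lemma F_lam_eq lam x : 0 < x -> F_lam lam x = F0 x - lam * Afun x.
Proof. intros Hx. unfold F_lam, F0, Afun, Bfun. field. lra. Qed.

Lemma suff1 lam : lam <= 0 -> CM (F_lam lam).
Proof.
  intros Hl. apply (CM_ext (fun x => F0 x + (- lam) * Afun x)).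
  - intros x Hx. rewrite F_lam_eq; auto. ring.
  - apply CM_plus; [apply CM_F0|apply CM_scal; [lra|apply CM_A]].
Qed.

Lemma suff2 lam : 4 <= lam -> CM (fun x => - F_lam lam x).
Proof.
  intros Hl. apply (CM_ext (fun x => (4 * Afun x - F0 x) + (lam - 4) * Afun x)).
  - intros x Hx. rewrite F_lam_eq; auto. ring.
  - apply CM_plus; [apply CM_mF4|apply CM_scal; [lra|apply CM_A]].
Qed.

Lemma CM_nonneg (f : R -> R) : CM f -> forall x, 0 < x -> 0 <= f x.
Proof.
  intros [g [G0 [G1 G2]]] x Hx. rewrite <- G0 by auto. specialize (G2 0%nat x Hx). simpl in G2. lra.
Qed.

Lemma CM_noninc (f : R -> R) : CM f -> forall x y, 0 < x -> x <= y -> f y <= f x.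
Proof.
  intros [g [G0 [G1 G2]]] x y Hx Hxy. rewrite <- !G0 by lra.
  assert (H := fam_noninc g G1 G2 0%nat x y Hx Hxy). simpl in H. lra.
Qed.

Lemma Tfun_S N x : Tfun (S N) x = / x ^ 2 + Tfun N (x + 1).
Proof.
  unfold Tfun. rewrite decomp_sum by lia. simpl pred. rewrite Rplus_0_r. f_equal.
  apply sum_eq. intros i _. rewrite S_INR. f_equal. f_equal. ring.
Qed.

Lemma trigamma_rec x : 0 < x -> trigamma x = / x ^ 2 + trigamma (x + 1).
Proof.
  intros Hx. apply (UL_sequence (fun N => Tfun (S N) x)).
  - apply (Un_cv_ext (fun P => Tfun (P + 1)%nat x)).
    + intros P. f_equal. lia.
    + apply (Un_cv_shift (fun N => Tfun N x)). apply trigamma_cv; auto.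
  - apply (Un_cv_ext (fun N => / x ^ 2 + Tfun N (x + 1))).
    + intros N. rewrite Tfun_S. reflexivity.
    + apply CV_plus. apply Un_cv_const. apply trigamma_cv. lra.
Qed.

Lemma F0_rec x : 0 < x -> F0 x = DB x + F0 (x + 1).
Proof. intros Hx. unfold F0, DB. rewrite trigamma_rec by auto. ring. Qed.

Lemma one_le_mult a b : 1 <= a -> 1 <= b -> 1 <= a * b.
Proof. intros; nra. Qed.

Lemma Pt_le1 j k l x : 0 < x -> Pt 0 j k l x <= 1.
Proof.
  intros Hx. unfold Pt. rewrite <- Rinv_1. apply Rinv_le_contravar; [lra|].
  repeat apply one_le_mult; try (apply pow_R1_Rle; lra). simpl; lra.
Qed.

Lemma DB_le x : 0 < x -> DB x <= 25 / 2.
Proof.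
  intros Hx. rewrite DB_cert by auto.
  assert (H1 := Pt_le1 4 3 3 x Hx). assert (H2 := Pt_le1 3 4 4 x Hx).
  assert (H3 := Pt_le1 1 3 4 x Hx). assert (H4 := Pt_le1 1 3 3 x Hx).
  assert (H5 := Pt_le1 1 0 4 x Hx). assert (H6 := Pt_le1 0 4 4 x Hx).
  assert (H7 := Pt_le1 0 4 1 x Hx). lra.
Qed.

Lemma Afun_lower x : 0 < x <= 1 -> / (432 * x) <= Afun x.
Proof.
  intros Hx. unfold Afun. unfold Rdiv.
  assert (Hd : 0 < 24 * x * (1 + x) ^ 3 * (2 + x) ^ 2).
  { apply Rmult_lt_0_compat; [apply Rmult_lt_0_compat; [lra|apply pow_lt; lra]|apply pow_lt; lra]. }
  apply Rle_trans with (4 * / (24 * x * (1 + x) ^ 3 * (2 + x) ^ 2)).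
  - replace (/ (432 * x)) with (4 * / (1728 * x)) by (field; lra).
    apply Rmult_le_compat_l; [lra|]. apply Rinv_le_contravar; auto.
    assert ((1 + x) ^ 3 <= 8) by (replace 8 with (2 ^ 3) by ring; apply pow_incr; lra).
    assert ((2 + x) ^ 2 <= 9) by (replace 9 with (3 ^ 2) by ring; apply pow_incr; lra).
    assert (0 < (1 + x) ^ 3) by (apply pow_lt; lra).
    assert (0 < (2 + x) ^ 2) by (apply pow_lt; lra).
    replace (1728 * x) with (24 * x * 8 * 9) by ring.
    apply Rmult_le_compat; try lra.
    + apply Rmult_le_pos; [lra|lra].
    + apply Rmult_le_compat; lra.
  - apply Rmult_le_compat_r. apply Rlt_le, Rinv_0_lt_compat; auto. nra.
Qed.

Lemma nec1 lam : CM (F_lam lam) -> lam <= 0.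
Proof.
  intros H. destruct (Rle_or_lt lam 0) as [Hl|Hl]; auto. exfalso.
  set (K := 25 / 2 + Rabs (F0 1) + 1).
  assert (HK : 1 <= K) by (unfold K; assert (0 <= Rabs (F0 1)) by apply Rabs_pos; lra).
  set (x := Rmin 1 (lam / (432 * K))).
  assert (Hx0 : 0 < x) by (unfold x; apply Rmin_pos; [lra|apply Rdiv_lt_0_compat; lra]).
  assert (Hx1 : x <= 1) by apply Rmin_l.
  assert (Hx2 : x <= lam / (432 * K)) by apply Rmin_r.
  assert (H1 := CM_nonneg _ H x Hx0).
  rewrite F_lam_eq in H1 by auto.
  rewrite F0_rec in H1 by auto.
  assert (H2 := DB_le x Hx0).
  assert (H3 := CM_noninc F0 CM_F0 1 (x + 1) ltac:(lra) ltac:(lra)).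
  assert (H4 := Afun_lower x ltac:(lra)).
  assert (H5 : K <= lam * / (432 * x)).
  { apply Rmult_le_reg_r with (432 * x); [lra|].
    rewrite Rmult_assoc, Rinv_l by lra. apply Rmult_le_reg_r with (/ (432 * K)).
    - apply Rinv_0_lt_compat; lra.
    - replace (K * (432 * x) * / (432 * K)) with x by (field; lra). unfold Rdiv in Hx2. lra. }
  assert (H6 : lam * / (432 * x) <= lam * Afun x) by (apply Rmult_le_compat_l; lra).
  assert (F0 1 <= Rabs (F0 1)) by apply Rle_abs.
  unfold K in H5. lra.
Qed.

Lemma Pt_le_pow i j k l y : 0 < y -> Pt i j k l y <= / y ^ (i + j + k + l).
Proof.
  intros Hy. unfold Pt. apply Rinv_le_contravar; [apply pow_lt; lra|].
  rewrite !pow_add.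
  assert (0 <= y ^ i) by (apply pow_le; lra).
  assert (0 <= y ^ j) by (apply pow_le; lra).
  assert (0 <= y ^ k) by (apply pow_le; lra).
  assert (0 <= y ^ l) by (apply pow_le; lra).
  assert (y ^ j <= (y + 1) ^ j) by (apply pow_incr; lra).
  assert (y ^ k <= (y + 2) ^ k) by (apply pow_incr; lra).
  assert (y ^ l <= (y + 3) ^ l) by (apply pow_incr; lra).
  apply Rmult_le_compat; try lra.
  - apply Rmult_le_pos; [apply Rmult_le_pos|]; lra.
  - apply Rmult_le_compat; try lra.
    + apply Rmult_le_pos; lra.
    + apply Rmult_le_compat; lra.
Qed.

Lemma Pt_le6 i j k l y : 1 <= y -> (6 <= i + j + k + l)%nat -> Pt i j k l y <= / y ^ 6.
Proof.
  intros Hy Hd. eapply Rle_trans. apply Pt_le_pow; lra.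
  apply Rinv_le_contravar; [apply pow_lt; lra|]. apply Rle_pow; auto.
Qed.

Lemma mD4_upper y : 1 <= y -> mD4 y <= 14 * / y ^ 6.
Proof.
  intros Hy. rewrite mD4_cert by lra.
  assert (H1 := Pt_le6 1 4 3 2 y Hy ltac:(lia)).
  assert (H2 := Pt_le6 1 3 4 2 y Hy ltac:(lia)).
  assert (H3 := Pt_le6 1 0 4 1 y Hy ltac:(lia)).
  assert (H4 := Pt_le6 1 0 3 2 y Hy ltac:(lia)).
  assert (H5 := Pt_le6 0 4 1 1 y Hy ltac:(lia)).
  assert (H6 := Pt_le6 0 4 0 2 y Hy ltac:(lia)).
  assert (0 < / y ^ 6) by (apply Rinv_0_lt_compat, pow_lt; lra). lra.
Qed.

Lemma Pt_pos i j k l y : 0 < y -> 0 < Pt i j k l y.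
Proof.
  intros Hy. unfold Pt. apply Rinv_0_lt_compat.
  repeat apply Rmult_lt_0_compat; apply pow_lt; lra.
Qed.

Lemma prod4_le a b c d a' b' c' d' : 0 <= a <= a' -> 0 <= b <= b' -> 0 <= c <= c' -> 0 <= d <= d' ->
  a * b * c * d <= a' * b' * c' * d'.
Proof.
  intros. assert (0 <= a * b) by (apply Rmult_le_pos; lra).
  assert (0 <= a * b * c) by (apply Rmult_le_pos; lra).
  apply Rmult_le_compat; try lra. apply Rmult_le_compat; try lra. apply Rmult_le_compat; lra.
Qed.

Lemma mDA_lower y : 1 <= y -> 13 / 2304 * / y ^ 5 <= mDA y.
Proof.
  intros Hy. rewrite mDA_cert by lra.
  assert (H1 := Pt_pos 1 3 3 2 y ltac:(lra)).
  assert (H3 := Pt_pos 1 0 3 1 y ltac:(lra)).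
  assert (H4 := Pt_pos 1 0 2 2 y ltac:(lra)).
  assert (H2 : / (96 * y ^ 5) <= Pt 1 1 1 2 y).
  { unfold Pt. apply Rinv_le_contravar.
    - repeat apply Rmult_lt_0_compat; try apply pow_lt; lra.
    - replace (96 * y ^ 5) with (y ^ 1 * (2 * y) ^ 1 * (3 * y) ^ 1 * (4 * y) ^ 2) by ring.
      assert (0 <= y ^ 1) by (apply pow_le; lra).
      assert ((y + 1) ^ 1 <= (2 * y) ^ 1) by (apply pow_incr; lra).
      assert ((y + 2) ^ 1 <= (3 * y) ^ 1) by (apply pow_incr; lra).
      assert ((y + 3) ^ 2 <= (4 * y) ^ 2) by (apply pow_incr; lra).
      assert (0 <= (y + 1) ^ 1) by (apply pow_le; lra).
      assert (0 <= (y + 2) ^ 1) by (apply pow_le; lra).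
      assert (0 <= (y + 3) ^ 2) by (apply pow_le; lra).
      apply prod4_le; lra. }
  replace (13 / 2304 * / y ^ 5) with (13 / 24 * / (96 * y ^ 5)).
  - lra.
  - field. lra.
Qed.

Lemma sum_lin2 (f g : nat -> R) (a : R) N :
  sum_f_R0 (fun k => f k - a * g k) N = sum_f_R0 f N - a * sum_f_R0 g N.
Proof. induction N as [|N IH]; simpl; [ring|rewrite IH; ring]. Qed.

Lemma nec2 lam : CM (fun x => - F_lam lam x) -> 4 <= lam.
Proof.
  intros H. destruct (Rle_or_lt 4 lam) as [Hl|Hl]; auto. exfalso.
  set (d := 4 - lam).
  assert (Hd : 0 < d) by (unfold d; lra).
  set (h := fun y => mD4 y - d * mDA y).
  set (Y := 1 + 14 * 2304 / (13 * d)).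
  assert (HY0 : 14 * 2304 / (13 * d) > 0) by (apply Rdiv_lt_0_compat; lra).
  assert (HY : 1 <= Y) by (unfold Y; lra).
  assert (hneg : forall y, Y <= y -> h y < 0).
  { intros y Hy. unfold h.
    assert (Hy1 : 1 <= y) by lra.
    assert (A1 := mD4_upper y Hy1). assert (A2 := mDA_lower y Hy1).
    set (e := / y ^ 5) in *.
    assert (He : 0 < e) by (apply Rinv_0_lt_compat, pow_lt; lra).
    assert (E6 : / y ^ 6 = e * / y).
    { unfold e. rewrite <- Rinv_mult. f_equal. simpl. ring. }
    rewrite E6 in A1.
    assert (Hyi : / y < 13 * d / (14 * 2304)).
    { replace (13 * d / (14 * 2304)) with (/ (14 * 2304 / (13 * d))) by (field; lra).
      apply Rinv_lt_contravar; [apply Rmult_lt_0_compat; lra| unfold Y in Hy; lra]. }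
    assert (A3 : 14 * (e * / y) < d * (13 / 2304 * e)).
    { replace (14 * (e * / y)) with (14 * e * / y) by ring.
      apply Rlt_le_trans with (14 * e * (13 * d / (14 * 2304))).
      - apply Rmult_lt_compat_l; [lra|auto].
      - right. field. }
    assert (A4 : d * (13 / 2304 * e) <= d * mDA y) by (apply Rmult_le_compat_l; lra).
    lra. }
  assert (Hcv : Un_cv (fun N => sum_f_R0 (fun k => h (Y + INR k)) N) (- F_lam lam Y)).
  { apply (Un_cv_ext (fun N => sum_f_R0 (fun k => mD4 (Y + INR k)) N - d * sum_f_R0 (fun k => mDA (Y + INR k)) N)).
    - intros N. unfold h. rewrite sum_lin2. reflexivity.
    - replace (- F_lam lam Y) with ((4 * Afun Y - F0 Y) - d * Afun Y).
      + apply CV_minus; [apply mF4_cv; lra|apply Un_cv_scal, A_cv; lra].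
      + rewrite F_lam_eq by lra. unfold d. ring. }
  assert (Hbound : forall N, sum_f_R0 (fun k => h (Y + INR k)) N <= h (Y + INR 0)).
  { induction N as [|N IH].
    - simpl. lra.
    - rewrite tech5. assert (h (Y + INR (S N)) < 0).
      { apply hneg. assert (0 <= INR (S N)) by apply pos_INR. lra. }
      lra. }
  assert (Hle := Rle_cv_lim Hbound Hcv (Un_cv_const _)).
  assert (Hneg := hneg (Y + INR 0) ltac:(simpl; lra)).
  assert (Hnn := CM_nonneg _ H Y ltac:(lra)). simpl in Hnn. lra.
Qed.

Theorem mainTheorem7 (lam : R) :
  (completely_monotonic_pos (F_lam lam) <-> lam <= 0) /\
  (completely_monotonic_pos (fun x => - F_lam lam x) <-> 4 <= lam).
Proof.
  split; split.
  - apply nec1.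
  - apply suff1.
  - apply nec2.
  - apply suff2.
Qed.
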